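(* Let $A\in\mathbb{R}^{n\times n}$ be symmetric and let $V_k=[v_1,\ldots,v_k]$ ($v_j\in\mathbb{R}^{n\times p}$, $v_0=0$), $v_{k+1}\in\mathbb{R}^{n\times p}$, $\beta_{k+1}^{FP}\in\mathbb{R}^{p\times p}$ and the symmetric block tridiagonal matrix $T_k\in\mathbb{R}^{kp\times kp}$ (diagonal blocks $\alpha_1,\ldots,\alpha_k$, subdiagonal blocks $\beta_2,\ldots,\beta_k$, superdiagonal blocks $\beta_j^T$) be the quantities obtained after $k$ iterations of the finite precision block Lanczos algorithm applied to $A$ and an initial block vector $v$, satisfying \[ AV_k=V_kT_k+v_{k+1}\beta_{k+1}^{FP}e_k^T+\Delta V_k,\qquad \Delta V_k=[\Delta v_1,\ldots,\Delta v_k], \] with $\|\Delta v_j\|\le\mathcal{O}(\epsilon)\|A\|$ for $j=1,\ldots,k$, $\|v_{j+1}^Tv_{j+1}-I_p\|\le\mathcal{O}(\epsilon)$, $\|v_j^Tv_{j+1}\beta_{j+1}\|\le\mathcal{O}(\epsilon)\|A\|$ for $j=0,\ldots,k$ (with $\beta_{k+1}=\beta_{k+1}^{FP}$ here), and $\|\beta_{k+1}^{FP}\|\le\mathcal{O}(1)\|A\|$. Let $T_k=S_k\Theta_kS_k^T$ with $S_k^TS_k=I_{kp}$ be a spectral decomposition, with Ritz vectors $Z_k=V_kS_k$, and define $r_k^T=[v_k^TV_{k-1},0_p]$. Let $Z_m^{(k)}=V_kS_m^{(k)}$ be a selected subset of $m$ linearly independent Ritz vectors ($S_m^{(k)}$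 the corresponding columns of $S_k$), with QR factorization $Z_m^{(k)}=W_kR_k$, and let $\rho_k=\|R_k^{-1}\|$. Consider the continuation process started from $W_k$, $v_{k-1},v_k,\alpha_k,\beta_k$: with $P_1=W_kW_k^T$, $P_2=P_1+q_{k+1}q_{k+1}^T$, $P_j=P_2+q_{k+j-1}q_{k+j-1}^T$ ($j\ge3$), \[ \begin{aligned} q_{k+1}\beta_{k+1}&=(I_n-P_1)(Av_k-v_k\alpha_k-v_{k-1}\beta_k^T),\\ q_{k+2}\beta_{k+2}&=(I_n-P_2)(Aq_{k+1}-v_k\beta_{k+1}^T),\\ q_{k+j}\beta_{k+j}&=(I_n-P_j)(Aq_{k+j-1}-q_{k+j-2}\beta_{k+j-1}^T),\quad j\ge3, \end{aligned} \] where the columns of $q_{k+j}$ form an orthonormal basis of the column space of the right-hand side and $\beta_{k+j}$ has full row rank, and define the perturbations \[ h_k=P_1(Av_k-v_k\alpha_k-v_{k-1}\beta_k^T),\quad h_{k+1}=P_1(Aq_{k+1}-v_k\beta_{k+1}^T),\quad h_{k+j}=P_1Aq_{k+j}+q_{k+1}\beta_{k+1}v_k^Tq_{k+j}\ (j\ge2). \] Then \[ \begin{aligned} h_k&=W_kW_k^Tv_{k+1}\beta_{k+1}^{FP}+\Delta_0^{(k)},\\ h_{k+1}&=-W_kR_k^{-T}S_m^{(k)T}r_k\beta_{k+1}^T+\Delta_1^{(k)},\\ h_{k+j}&=q_{k+1}\beta_{k+1}v_k^Tq_{k+j}+\Delta_j^{(k)},\quad j\ge2, \end{aligned} \] where $\|\Delta_0^{(k)}\|\le\mathcal{O}(\epsilon)\|A\|$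 and $\|\Delta_j^{(k)}\|\le(1+\rho_k)\|h_k\|+(1+\rho_k)\mathcal{O}(\epsilon)\|A\|$ for $j\ge1$.
   Context: All norms are 2-norms; $\epsilon$ is the unit roundoff. $\mathcal{O}(z)$, $z>0$, denotes an unspecified number whose size is bounded by $z$ times a constant that may depend on small powers of $n$ (problem size), $p$ (block width) and $k$ (iteration number). $e_k^T=[0_p,\ldots,0_p,I_p]\in\mathbb{R}^{p\times kp}$. Note that $\beta_{k+1}$ (from the continuation process) is in general different from $\beta_{k+1}^{FP}$ (from the finite precision algorithm). *)

(* Defs.v *)
From mathcomp Require Import all_boot all_order all_algebra.
From mathcomp Require Import boolp classical_sets reals.
Set Implicit Arguments. Unset Strict Implicit. Unset Printing Implicit Defensive.
Import Order.TTheory GRing.Theory Num.Theory.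
Local Open Scope ring_scope.
Local Open Scope classical_set_scope.

Definition vnorm (R : realType) (n : nat) (x : 'cV[R]_n) : R :=
  Num.sqrt (\sum_(i < n) x i ord0 ^+ 2).

Definition opnorm (R : realType) (m n : nat) (M : 'M[R]_(m, n)) : R :=
  sup [set vnorm (M *m x) | x in [set x : 'cV[R]_n | vnorm x <= 1]].

Definition blockV (R : realType) (n p k : nat) (v : nat -> 'M[R]_(n, p))
  : 'M[R]_(n, \sum_(j < k) p) := \mxrow_(j < k) v j.+1.

Definition blockT (R : realType) (p k : nat) (alpha beta : nat -> 'M[R]_p)
  : 'M[R]_(\sum_(j < k) p) :=
  \mxblock_(i < k, j < k)
    (if i == j then alpha i.+1
     else if (i : nat) == j.+1 then beta i.+1
     else if (j : nat) == i.+1 then (beta j.+1)^T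
     else 0).

Definition ekT (R : realType) (p k : nat) : 'M[R]_(p, \sum_(j < k) p) :=
  \mxrow_(j < k) (if (j : nat) == k.-1 then (1%:M : 'M[R]_p) else 0).

(* r_k with r_k^T = [v_k^T V_{k-1}, 0_p], i.e. r_k = [V_{k-1}^T v_k ; 0]. *)
Definition rvec (R : realType) (n p k : nat) (v : nat -> 'M[R]_(n, p))
  : 'M[R]_(\sum_(j < k) p, p) :=
  \mxcol_(j < k) (if (j < k.-1)%N then (v j.+1)^T *m v k else 0).

(* Main.v *)
Require Import Defs.
From mathcomp Require Import all_boot all_order all_algebra.
From mathcomp Require Import boolp classical_sets reals.
From mathcomp Require Import ring lra.
Import Order.TTheory GRing.Theory Num.Theory.
Local Open Scope ring_scope.

Module Helpers.
Set Implicit Arguments. Unset Strict Implicit. Unset Printing Implicit Defensive.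
Local Open Scope classical_set_scope.

Section Norms.
Variable R : realType.

Definition dotv (n : nat) (x y : 'cV[R]_n) : R := \sum_(i < n) x i ord0 * y i ord0.

Lemma dotvE n (x y : 'cV[R]_n) : dotv x y = (x^T *m y) ord0 ord0.
Proof. by rewrite /dotv mxE; apply: eq_bigr => i _; rewrite mxE. Qed.

Lemma dotvC n (x y : 'cV[R]_n) : dotv x y = dotv y x.
Proof. by apply: eq_bigr => i _; rewrite mulrC. Qed.

Lemma dotv_ge0 n (x : 'cV[R]_n) : 0 <= dotv x x.
Proof. by apply: sumr_ge0 => i _; rewrite -expr2 sqr_ge0. Qed.

Lemma vnormE n (x : 'cV[R]_n) : vnorm x = Num.sqrt (dotv x x).
Proof. by rewrite /vnorm /dotv; congr Num.sqrt; apply: eq_bigr => i _; rewrite expr2. Qed.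

Lemma vnorm_ge0 n (x : 'cV[R]_n) : 0 <= vnorm x.
Proof. by rewrite vnormE sqrtr_ge0. Qed.

Lemma vnorm_sq n (x : 'cV[R]_n) : vnorm x ^+ 2 = dotv x x.
Proof. by rewrite vnormE sqr_sqrtr // dotv_ge0. Qed.

Lemma dotv0 n (x : 'cV[R]_n) : dotv x x = 0 -> x = 0.
Proof.
move=> /eqP; rewrite psumr_eq0; last by move=> i _; rewrite -expr2 sqr_ge0.
move=> /allP H; apply/matrixP => i j; rewrite ord1 mxE.
have := H i (mem_index_enum _); rewrite /= mulf_eq0 orbb => /eqP ->.
by [].
Qed.

Lemma vnorm0 n (x : 'cV[R]_n) : vnorm x = 0 -> x = 0.
Proof. by move=> H; apply: dotv0; rewrite -vnorm_sq H expr2 mulr0. Qed.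

Lemma vnorm_zero n : vnorm (0 : 'cV[R]_n) = 0.
Proof.
rewrite vnormE /dotv big1 ?sqrtr0 // => i _; by rewrite mxE mul0r.
Qed.

Lemma dotv_lin n (a b : R) (x y z : 'cV[R]_n) :
  dotv (a *: x + b *: y) z = a * dotv x z + b * dotv y z.
Proof.
rewrite /dotv !mulr_sumr -big_split; apply: eq_bigr => i _ /=.
by rewrite !mxE; ring.
Qed.

Lemma sum_sq_expand n (a b : R) (x y : 'cV[R]_n) :
  dotv (a *: x - b *: y) (a *: x - b *: y) =
  a ^+ 2 * dotv x x - 2 * a * b * dotv x y + b ^+ 2 * dotv y y.
Proof.
rewrite /dotv !mulr_sumr -sumrB -big_split; apply: eq_bigr => i _ /=.
by rewrite !mxE; ring.
Qed.

Lemma CS n (x y : 'cV[R]_n) : dotv x y <= vnorm x * vnorm y.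
Proof.
have [/vnorm0 ->|xn0] := eqVneq (vnorm x) 0.
  by rewrite /dotv big1 ?vnorm_zero ?mul0r // => i _; rewrite mxE mul0r.
have [/vnorm0 ->|yn0] := eqVneq (vnorm y) 0.
  by rewrite /dotv big1 ?vnorm_zero ?mulr0 // => i _; rewrite mxE mulr0.
have ax : 0 < vnorm x by rewrite lt_def xn0 vnorm_ge0.
have ay : 0 < vnorm y by rewrite lt_def yn0 vnorm_ge0.
have := dotv_ge0 (vnorm y *: x - vnorm x *: y).
rewrite sum_sq_expand -!vnorm_sq => H.
have H2 : 0 < vnorm x * vnorm y by rewrite mulr_gt0.
nra.
Qed.

Lemma CSabs n (x y : 'cV[R]_n) : `|dotv x y| <= vnorm x * vnorm y.
Proof.
have H1 := CS x y.
have : dotv (- x) y <= vnorm x * vnorm y.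
  have -> : vnorm x = vnorm (- x).
    by rewrite !vnormE; congr Num.sqrt; apply: eq_bigr => i _; rewrite !mxE; ring.
  exact: CS.
have -> : dotv (- x) y = - dotv x y.
  by rewrite /dotv -sumrN; apply: eq_bigr => i _; rewrite !mxE mulNr.
move=> H2; rewrite ler_norml; apply/andP; split => //; lra.
Qed.

Lemma vnormD n (x y : 'cV[R]_n) : vnorm (x + y) <= vnorm x + vnorm y.
Proof.
have h : vnorm (x + y) ^+ 2 <= (vnorm x + vnorm y) ^+ 2.
  rewrite vnorm_sq.
  have -> : dotv (x + y) (x + y) = dotv x x + 2 * dotv x y + dotv y y.
    rewrite /dotv mulr_sumr -!big_split; apply: eq_bigr => i _ /=.
    by rewrite !mxE; ring.
  rewrite -!vnorm_sq; have := CS x y; nra.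
rewrite -ler_sqr ?nnegrE ?addr_ge0 ?vnorm_ge0 //.
Qed.

Lemma vnormZ n (a : R) (x : 'cV[R]_n) : vnorm (a *: x) = `|a| * vnorm x.
Proof.
rewrite !vnormE -sqrtr_sqr -sqrtrM ?sqr_ge0 //; congr Num.sqrt.
rewrite /dotv mulr_sumr; apply: eq_bigr => i _; rewrite !mxE; ring.
Qed.

Lemma vnormN n (x : 'cV[R]_n) : vnorm (- x) = vnorm x.
Proof. by rewrite -scaleN1r vnormZ normrN normr1 mul1r. Qed.

Lemma dotv_tr m n (M : 'M[R]_(m, n)) x y : dotv (M *m x) y = dotv x (M^T *m y).
Proof. by rewrite !dotvE trmx_mul mulmxA. Qed.

Definition frob m n (M : 'M[R]_(m, n)) : R := Num.sqrt (\sum_i \sum_j M i j ^+ 2).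

Lemma vnorm_frob m n (M : 'M[R]_(m, n)) x : vnorm x <= 1 -> vnorm (M *m x) <= frob M.
Proof.
move=> hx.
have h : vnorm (M *m x) ^+ 2 <= \sum_i \sum_j M i j ^+ 2.
  rewrite vnorm_sq /dotv; apply: ler_sum => i _.
  pose r : 'cV[R]_n := (row i M)^T.
  have e : (M *m x) i ord0 = dotv r x.
    by rewrite mxE /dotv; apply: eq_bigr => j _; rewrite !mxE.
  rewrite e -expr2.
  have h1 := CSabs r x.
  have h2 : vnorm r ^+ 2 = \sum_j M i j ^+ 2.
    by rewrite /vnorm sqr_sqrtr ?sumr_ge0 // => [|j _]; [apply: eq_bigr => j _; rewrite !mxE | rewrite sqr_ge0].
  have hr := vnorm_ge0 r; have hx0 := vnorm_ge0 x.
  have ha := normr_ge0 (dotv r x).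
  have h3 : `|dotv r x| <= vnorm r by nra.
  rewrite -h2 -[dotv r x ^+ 2](real_normK (num_real _)).
  nra.
rewrite /frob -[vnorm (M *m x)](ger0_norm (vnorm_ge0 _)) -sqrtr_sqr.
by rewrite ler_sqrt // sumr_ge0 // => i _; rewrite sumr_ge0 // => j _; rewrite sqr_ge0.
Qed.

Definition Eset m n (M : 'M[R]_(m, n)) :=
  [set vnorm (M *m x) | x in [set x : 'cV[R]_n | vnorm x <= 1]].

Lemma opnormE m n (M : 'M[R]_(m, n)) : opnorm M = sup (Eset M).
Proof. by []. Qed.

Lemma has_sup_E m n (M : 'M[R]_(m, n)) : has_sup (Eset M).
Proof.
split.
  exists (vnorm (M *m 0)); exists 0 => //=; rewrite vnorm_zero ler01 //.
exists (frob M) => y [x /= hx <-]; exact: vnorm_frob.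
Qed.

Lemma opnorm_ub m n (M : 'M[R]_(m, n)) x : vnorm x <= 1 -> vnorm (M *m x) <= opnorm M.
Proof.
move=> hx; rewrite opnormE; apply: sup_upper_bound; first exact: has_sup_E.
by exists x.
Qed.

Lemma opnorm_ge0 m n (M : 'M[R]_(m, n)) : 0 <= opnorm M.
Proof.
apply: le_trans (opnorm_ub M (x := 0) _); rewrite ?mulmx0 ?vnorm_zero //.
Qed.

Lemma opnorm_le m n (M : 'M[R]_(m, n)) b :
  (forall x, vnorm x <= 1 -> vnorm (M *m x) <= b) -> opnorm M <= b.
Proof.
move=> H; rewrite opnormE; apply: ge_sup.
  by exists (vnorm (M *m 0)); exists 0 => //=; rewrite vnorm_zero ler01.
by move=> y [x /= hx <-]; apply: H.
Qed.

Lemma opnorm_vec m n (M : 'M[R]_(m, n)) (x : 'cV[R]_n) : vnorm (M *m x) <= opnorm M * vnorm x.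
Proof.
have [/vnorm0 ->|xn0] := eqVneq (vnorm x) 0.
  by rewrite mulmx0 !vnorm_zero mulr0.
have ax : 0 < vnorm x by rewrite lt_def xn0 vnorm_ge0.
have h := opnorm_ub M (x := (vnorm x)^-1 *: x).
rewrite vnormZ ger0_norm ?invr_ge0 ?vnorm_ge0 // mulVf // lexx in h.
have := h isT; rewrite -scalemxAr vnormZ ger0_norm ?invr_ge0 ?vnorm_ge0 //.
by rewrite ler_pdivrMl // mulrC.
Qed.

Lemma opnormM m n l (M : 'M[R]_(m, n)) (N : 'M[R]_(n, l)) :
  opnorm (M *m N) <= opnorm M * opnorm N.
Proof.
apply: opnorm_le => x hx; rewrite -mulmxA.
apply: le_trans (opnorm_vec _ _) _; apply: ler_wpM2l; first exact: opnorm_ge0.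
apply: le_trans (opnorm_vec _ _) _.
by rewrite -[X in _ <= X]mulr1 ler_wpM2l // opnorm_ge0.
Qed.

Lemma opnormD m n (M N : 'M[R]_(m, n)) : opnorm (M + N) <= opnorm M + opnorm N.
Proof.
apply: opnorm_le => x hx; rewrite mulmxDl.
by apply: le_trans (vnormD _ _) _; apply: lerD; apply: opnorm_ub.
Qed.

Lemma opnormN m n (M : 'M[R]_(m, n)) : opnorm (- M) = opnorm M.
Proof.
have h : forall (M : 'M[R]_(m, n)), opnorm (- M) <= opnorm M.
  by move=> M'; apply: opnorm_le => x hx; rewrite mulNmx vnormN opnorm_ub.
by apply/eqP; rewrite eq_le h /= -{1}(opprK M) h.
Qed.

Lemma opnormB m n (M N : 'M[R]_(m, n)) : opnorm (M - N) <= opnorm M + opnorm N.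
Proof. by rewrite -(opnormN N); apply: opnormD. Qed.

Lemma opnorm0 m n : opnorm (0 : 'M[R]_(m, n)) = 0.
Proof.
apply/eqP; rewrite eq_le opnorm_ge0 andbT; apply: opnorm_le => x _.
by rewrite mul0mx vnorm_zero.
Qed.

Lemma opnorm_sum m n (I : finType) (F : I -> 'M[R]_(m, n)) :
  opnorm (\sum_i F i) <= \sum_i opnorm (F i).
Proof.
apply: (big_ind2 (fun a b => opnorm a <= b)); first by rewrite opnorm0.
  by move=> a1 b1 a2 b2 h1 h2; apply: le_trans (opnormD _ _) (lerD h1 h2).
by [].
Qed.

Lemma opnorm_trle m n (M : 'M[R]_(m, n)) : opnorm M^T <= opnorm M.
Proof.
apply: opnorm_le => x hx.
have h : vnorm (M^T *m x) ^+ 2 <= vnorm x * (opnorm M * vnorm (M^T *m x)).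
  rewrite vnorm_sq -dotv_tr dotvC.
  apply: le_trans (CS _ _) _; apply: ler_wpM2l; first exact: vnorm_ge0.
  exact: opnorm_vec.
have h0 := vnorm_ge0 (M^T *m x); have h1 := vnorm_ge0 x.
have h2 := opnorm_ge0 M.
have [->|nz] := eqVneq (vnorm (M^T *m x)) 0; first by [].
have pz : 0 < vnorm (M^T *m x) by rewrite lt_def nz h0.
set a := vnorm (M^T *m x) in h h0 nz pz *.
have h5 : vnorm x * (opnorm M * a) <= opnorm M * a.
  by rewrite ler_piMl // mulr_ge0.
have h6 : a * a <= opnorm M * a by rewrite -expr2; apply: le_trans h h5.
by rewrite -(ler_pM2r pz).
Qed.

Lemma opnorm_tr m n (M : 'M[R]_(m, n)) : opnorm M^T = opnorm M.
Proof.
by apply/eqP; rewrite eq_le opnorm_trle /= -{1}(trmxK M) opnorm_trle.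
Qed.

Lemma opnorm_iso m n (W : 'M[R]_(m, n)) : W^T *m W = 1%:M -> opnorm W <= 1.
Proof.
move=> h; apply: opnorm_le => x hx.
have e : vnorm (W *m x) = vnorm x.
  by rewrite !vnormE dotv_tr mulmxA h mul1mx.
by rewrite e.
Qed.

Lemma opnorm_isoT m n (W : 'M[R]_(m, n)) : W^T *m W = 1%:M -> opnorm W^T <= 1.
Proof. by move=> h; rewrite opnorm_tr opnorm_iso. Qed.

Lemma opnorm1 n : opnorm (1%:M : 'M[R]_n) <= 1.
Proof. by apply: opnorm_iso; rewrite trmx1 mul1mx. Qed.

Lemma opnorm_gram m n (M : 'M[R]_(m, n)) : opnorm M <= 1 + opnorm (M^T *m M).
Proof.
apply: opnorm_le => x hx.
have h : vnorm (M *m x) ^+ 2 <= opnorm (M^T *m M).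
  rewrite vnorm_sq dotv_tr mulmxA dotvC; apply: le_trans (CS _ _) _.
  have h1 := opnorm_vec (M^T *m M) x.
  have h2 := vnorm_ge0 x; have h3 := vnorm_ge0 (M^T *m M *m x).
  have h4 := opnorm_ge0 (M^T *m M).
  nra.
have h0 := vnorm_ge0 (M *m x); nra.
Qed.

End Norms.

Section More.
Variable R : realType.
Lemma opnormM_l1 m n l (M : 'M[R]_(m, n)) (N : 'M[R]_(n, l)) :
  opnorm M <= 1 -> opnorm (M *m N) <= opnorm N.
Proof.
move=> h; apply: le_trans (opnormM _ _) _.
by rewrite -[X in _ <= X]mul1r ler_wpM2r ?opnorm_ge0.
Qed.
Lemma opnormM_r1 m n l (M : 'M[R]_(m, n)) (N : 'M[R]_(n, l)) :
  opnorm N <= 1 -> opnorm (M *m N) <= opnorm M.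
Proof.
move=> h; apply: le_trans (opnormM _ _) _.
by rewrite -[X in _ <= X]mulr1 ler_wpM2l ?opnorm_ge0.
Qed.
End More.


Section Blocks.
Variable R : realType.

Definition Esel p k (j : 'I_k) : 'M[R]_(p, \sum_(l < k) p) :=
  \mxrow_(l < k) (if l == j then 1%:M else 0).

Lemma EselT p k (j : 'I_k) :
  (Esel p j)^T = \mxcol_(l < k) (if l == j then (1%:M : 'M[R]_p) else 0).
Proof.
rewrite tr_mxrow; apply: eq_mxcol => l; by case: eqP; rewrite ?trmx1 ?trmx0.
Qed.

Lemma mxrow_EselT n p k (D : 'I_k -> 'M[R]_(n, p)) (j : 'I_k) :
  \mxrow_(l < k) D l *m (Esel p j)^T = D j.
Proof.
rewrite EselT mul_mxrow_mxcol (bigD1 j) //= eqxx mulmx1 big1 ?addr0 //.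
by move=> i /negbTE ->; rewrite mulmx0.
Qed.

Lemma Esel_EE p k (j : 'I_k) : Esel p j *m (Esel p j)^T = 1%:M.
Proof. by rewrite /Esel mxrow_EselT eqxx. Qed.

Lemma opnorm_EselT p k (j : 'I_k) : opnorm (Esel p j)^T <= 1.
Proof. by apply: opnorm_iso; rewrite trmxK Esel_EE. Qed.

Lemma opnorm_Esel p k (j : 'I_k) : opnorm (Esel p j) <= 1.
Proof. by rewrite -opnorm_tr opnorm_EselT. Qed.

Lemma mxrow_Esel n p k (D : 'I_k -> 'M[R]_(n, p)) :
  \mxrow_(l < k) D l = \sum_(j < k) D j *m Esel p j.
Proof.
symmetry; transitivity (\sum_(j < k) \mxrow_(l < k) (D j *m
    (if l == j then (1%:M : 'M[R]_p) else 0))).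
  by apply: eq_bigr => j _; rewrite /Esel mul_mxrow.
rewrite -mxrow_sum; apply: eq_mxrow => l.
rewrite (bigD1 l) //= eqxx mulmx1 big1 ?addr0 //.
by move=> i; rewrite eq_sym => /negbTE ->; rewrite mulmx0.
Qed.

Lemma opnorm_mxrow n p k (D : 'I_k -> 'M[R]_(n, p)) :
  opnorm (\mxrow_(l < k) D l) <= \sum_(j < k) opnorm (D j).
Proof.
rewrite mxrow_Esel; apply: le_trans (opnorm_sum _) _; apply: ler_sum => j _.
apply: le_trans (opnormM _ _) _.
by rewrite -[X in _ <= X]mulr1 ler_wpM2l ?opnorm_ge0 ?opnorm_Esel.
Qed.

Lemma ekT_Esel p k : ekT R p k.+1 = Esel p (@ord_max k).
Proof. by apply: eq_mxrow => l. Qed.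

Lemma blockT_EselT p k (alpha beta : nat -> 'M[R]_p) (j : 'I_k) :
  blockT k alpha beta *m (Esel p j)^T =
  \mxcol_(i < k) (if i == j then alpha i.+1
     else if (i : nat) == j.+1 then beta i.+1
     else if (j : nat) == i.+1 then (beta j.+1)^T
     else 0).
Proof.
rewrite EselT /blockT mul_mxblock_mxrow; apply: eq_mxcol => i.
rewrite (bigD1 j) //= eqxx mulmx1 big1 ?addr0 //.
by move=> l /negbTE ->; rewrite mulmx0.
Qed.

Lemma lanczos_col n p k (v : nat -> 'M[R]_(n, p)) (alpha beta : nat -> 'M[R]_p) :
  v 0%N = 0 ->
  blockV k.+1 v *m blockT k.+1 alpha beta *m (ekT R p k.+1)^T =
  v k.+1 *m alpha k.+1 + v k *m (beta k.+1)^T.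
Proof.
move=> v0; rewrite ekT_Esel -mulmxA blockT_EselT /blockV mul_mxrow_mxcol.
rewrite big_ord_recr /= eqxx addrC; congr (_ + _).
rewrite (eq_bigr (fun i : 'I_k => if k == i.+1 then v i.+1 *m (beta k.+1)^T else 0)); last first.
  move=> i _; have hi := ltn_ord i.
  have -> : (widen_ord (leqnSn k) i == ord_max) = false.
    by apply/negbTE; rewrite -val_eqE /= neq_ltn hi.
  have -> : ((i : nat) == k.+1) = false by apply/negbTE; rewrite neq_ltn ltnS ltnW.
  by case: eqP => _; rewrite ?mulmx0.
case: k => [|k]; first by rewrite big_ord0 v0 mul0mx.
rewrite big_ord_recr /= eqxx big1 ?add0r // => i _.
  by rewrite eqSS; case: eqP => // e; move: (ltn_ord i); rewrite -e ltnn.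
Qed.

Lemma rvec_split n p k (v : nat -> 'M[R]_(n, p)) :
  (blockV k.+1 v)^T *m v k.+1 =
  rvec k.+1 v + (ekT R p k.+1)^T *m ((v k.+1)^T *m v k.+1).
Proof.
rewrite ekT_Esel EselT /blockV tr_mxrow !mxcol_mul /rvec -mxcolD.
apply: eq_mxcol => j /=.
have hj := ltn_ord j.
case: ltnP => h.
  have -> : (j == ord_max) = false.
    by apply/negbTE; rewrite -val_eqE /= neq_ltn h.
  by rewrite mul0mx addr0.
have e : j = ord_max by apply/val_inj => /=; apply/eqP; rewrite eqn_leq h -ltnS hj.
by rewrite e eqxx mul1mx add0r.
Qed.

Lemma colsub_iso m n (S : 'M[R]_n) (f : 'I_m -> 'I_n) :
  S^T *m S = 1%:M -> injective f -> (colsub f S)^T *m colsub f S = 1%:M.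
Proof.
move=> hS finj; apply/matrixP => i j.
have := congr1 (fun M : 'M[R]_n => M (f i) (f j)) hS => /=.
rewrite !mxE (inj_eq finj) => <-.
by apply: eq_bigr => l _; rewrite !mxE.
Qed.

Lemma colsub_diag m n (S T Th : 'M[R]_n) (f : 'I_m -> 'I_n) :
  S^T *m S = 1%:M -> is_diag_mx Th -> T = S *m Th *m S^T ->
  T *m colsub f S = colsub f S *m diag_mx (\row_l Th (f l) (f l)).
Proof.
move=> hS /is_diag_mxP hD ->.
rewrite -!mulmxA mulmx_colsub hS mulmx_colsub mulmx1 mulmx_colsub mul_mx_diag.
apply/matrixP => i j; rewrite !mxE (bigD1 (f j)) //= big1 ?addr0.
  by [].

by move=> l hl; rewrite hD ?mulr0.
Qed.

End Blocks.

End Helpers.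
Import Helpers.

Lemma orth_lem (R : realType) n a b c (N : 'M[R]_(n, a)) (U : 'M[R]_(n, b)) (Mx : 'M[R]_(n, c)) :
  (U^T <= Mx^T)%MS -> N^T *m Mx = 0 -> N^T *m U = 0.
Proof.
move=> /submxP [D hD] h.
rewrite -[N^T *m U]trmxK trmx_mul trmxK hD -mulmxA.
have -> : Mx^T *m N = 0 by rewrite -[N]trmxK -trmx_mul h trmx0.
by rewrite mulmx0 trmx0.
Qed.

Lemma proj_lem (R : realType) n a b (N : 'M[R]_(n, a)) (P : 'M[R]_n) (Y : 'M[R]_(n, b)) :
  N^T *m (1%:M - (P + Y *m Y^T)) = N^T *m (1%:M - P) - N^T *m Y *m Y^T.
Proof. by rewrite opprD addrA mulmxBr mulmxA. Qed.

Lemma arith2 (R : realFieldType) (rho x a Cc : R) : 0 <= rho -> 0 <= a -> 0 <= Cc ->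
  rho * x <= rho * Cc -> rho * x <= (1 + rho) * a + (1 + rho) * Cc.
Proof. move=> *; nra. Qed.

Lemma zid2 (V : zmodType) (a b d r s : V) : a - b + d - (r + s) + r = a - s - b + d.
Proof. by rewrite opprD !addrA addrAC addrNK addrAC [a - b - s]addrAC. Qed.

Lemma zid1 (V : zmodType) (y a b c d : V) : y = a + b + (c + d) -> y - a - b = c + d.
Proof. move=> ->. apply/eqP; rewrite !subr_eq; apply/eqP. by rewrite [RHS]addrC [c + d + b]addrC addrA. Qed.

Theorem theorem5 (R : realType) (n p k : nat) (c : R) :
  (1 <= k)%N -> 0 <= c ->
  exists (C eps0 : R), 0 <= C /\ 0 < eps0 /\
  forall (eps : R) (m : nat) (A : 'M[R]_n) (v : nat -> 'M[R]_(n, p))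
    (alpha beta : nat -> 'M[R]_p) (betaFP : 'M[R]_p) (dv : nat -> 'M[R]_(n, p))
    (S Theta : 'M[R]_(\sum_(j < k) p)) (f : 'I_m -> 'I_(\sum_(j < k) p))
    (W : 'M[R]_(n, m)) (Rk : 'M[R]_m)
    (rw : nat -> nat) (Q : forall j : nat, 'M[R]_(n, rw j))
    (B1 : 'M[R]_(rw 0%N, p)) (B : forall j : nat, 'M[R]_(rw j.+1, rw j)),
  0 < eps <= eps0 ->
  (* the finite precision block Lanczos quantities *)
  A^T = A ->
  v 0%N = 0 ->
  A *m blockV k v
    = blockV k v *m blockT k alpha beta + v k.+1 *m betaFP *m ekT R p k
      + \mxrow_(j < k) dv j.+1 ->
  (forall j, (1 <= j <= k)%N -> opnorm (dv j) <= c * eps * opnorm A) ->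
  (forall j, (j <= k)%N -> opnorm ((v j.+1)^T *m v j.+1 - 1%:M) <= c * eps) ->
  (forall j, (j < k)%N ->
     opnorm ((v j)^T *m v j.+1 *m beta j.+1) <= c * eps * opnorm A) ->
  opnorm ((v k)^T *m v k.+1 *m betaFP) <= c * eps * opnorm A ->
  opnorm betaFP <= c * opnorm A ->
  (* spectral decomposition T_k = S_k Theta_k S_k^T *)
  S^T *m S = 1%:M -> is_diag_mx Theta ->
  blockT k alpha beta = S *m Theta *m S^T ->
  (* selected linearly independent Ritz vectors and their QR factorization *)
  injective f ->
  let Sm := colsub f S in
  let Zm := blockV k v *m Sm in
  \rank Zm = m ->
  W^T *m W = 1%:M -> is_trig_mx Rk^T -> Zm = W *m Rk ->
  (* the continuation process *)
  let P1 := W *m W^T in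
  let P2 := P1 + Q 0%N *m (Q 0%N)^T in
  (forall j, (Q j)^T *m Q j = 1%:M) ->
  let X1 := (1%:M - P1) *m (A *m v k - v k *m alpha k - v k.-1 *m (beta k)^T) in
  Q 0%N *m B1 = X1 -> ((Q 0%N)^T == X1^T)%MS -> row_free B1 ->
  let X2 := (1%:M - P2) *m (A *m Q 0%N - v k *m B1^T) in
  Q 1%N *m B 0%N = X2 -> ((Q 1%N)^T == X2^T)%MS -> row_free (B 0%N) ->
  (forall j,
     let Xj := (1%:M - (P2 + Q j.+1 *m (Q j.+1)^T))
                 *m (A *m Q j.+1 - Q j *m (B j)^T) in
     Q j.+2 *m B j.+1 = Xj /\ ((Q j.+2)^T == Xj^T)%MS /\ row_free (B j.+1)) ->
  (* perturbations *)
  let hk := P1 *m (A *m v k - v k *m alpha k - v k.-1 *m (beta k)^T) in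
  let hk1 := P1 *m (A *m Q 0%N - v k *m B1^T) in
  let h := fun j => P1 *m A *m Q j.+1 + Q 0%N *m B1 *m (v k)^T *m Q j.+1 in
  let rho := opnorm (invmx Rk) in
  opnorm (hk - W *m W^T *m v k.+1 *m betaFP) <= C * eps * opnorm A /\
  opnorm (hk1 - (- (W *m (invmx Rk)^T *m Sm^T *m rvec k v *m B1^T)))
    <= (1 + rho) * opnorm hk + (1 + rho) * (C * eps * opnorm A) /\
  (forall j,
    opnorm (h j - Q 0%N *m B1 *m (v k)^T *m Q j.+1)
      <= (1 + rho) * opnorm hk + (1 + rho) * (C * eps * opnorm A)).
Proof.
case: k => // k _ c0.
exists (c * (2 * ((2 + c) * c + c)) + c + k.+1%:R * c), 1.
split; first by rewrite !addr_ge0 ?mulr_ge0 ?ler0n // addr_ge0 // ?mulr_ge0 ?addr_ge0.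
split; first exact: ltr01.
move=> eps m A v alpha beta betaFP dv S Theta f W Rk rw Q B1 B /andP[eps0 eps1]
  hA v0 hL hdv hvv hvb hvbk hbFP hSS hTh hT finj Sm Zm hrank hWW _ hZ P1 P2 hQQ
  X1 hX1 hQ0 _ X2 hX2 hQ1 _ hQj hk hk1 h rho.
set y := A *m v k.+1 - v k.+1 *m alpha k.+1 - v k *m (beta k.+1)^T.
set dV := \mxrow_(j < k.+1) dv j.+1.
set eT := (ekT R p k.+1)^T.
have Fy : y = v k.+2 *m betaFP + dv k.+1.
  have := congr1 (mulmx^~ eT) hL; rewrite /= mulmxDl mulmxDl -mulmxA.
  rewrite /eT lanczos_col // ekT_Esel -!mulmxA Esel_EE mulmx1 /dV mxrow_EselT /=.
  rewrite mxrow_EselT /= => e.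
  by apply: zid1; rewrite e -addrA.
have hWP1 : W^T *m (1%:M - P1) = 0.
  by rewrite /P1 mulmxBr mulmx1 mulmxA hWW mul1mx subrr.
have hWTQ0 : W^T *m Q 0%N = 0.
  apply: (@orth_lem _ _ _ _ _ _ _ X1); first by case/andP: hQ0.
  by rewrite /X1 mulmxA hWP1 mul0mx.
have hQ0W : (Q 0%N)^T *m W = 0 by rewrite -[W]trmxK -trmx_mul hWTQ0 trmx0.
have hWP2 : W^T *m (1%:M - P2) = 0.
  by rewrite /P2 proj_lem hWP1 hWTQ0 mul0mx subr0.
have hQ0P2 : (Q 0%N)^T *m (1%:M - P2) = 0.
  by rewrite /P2 proj_lem hQQ mul1mx /P1 mulmxBr mulmx1 mulmxA hQ0W mul0mx subr0 subrr.
have hQs : forall j, W^T *m Q j.+1 = 0 /\ (Q 0%N)^T *m Q j.+1 = 0.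
  elim => [|j [IH1 IH2]].
    case/andP: hQ1 => hm _.
    by split; apply: (@orth_lem _ _ _ _ _ _ _ X2) => //; rewrite /X2 mulmxA ?hWP2 ?hQ0P2 mul0mx.
  move: (hQj j) => /= [_ [/andP [hm _] _]].
  split; apply: (@orth_lem _ _ _ _ _ _ _ _ hm); rewrite mulmxA proj_lem ?IH1 ?IH2 mul0mx subr0 ?hWP2 ?hQ0P2 mul0mx //.
have hRu : Rk \in unitmx.
  rewrite -row_free_unit /row_free eqn_leq rank_leq_row /=.
  by apply: leq_trans (mxrankM_maxr W Rk); rewrite -hZ hrank.
have hWZ : W = Zm *m invmx Rk by rewrite hZ mulmxK.
set G := (invmx Rk)^T.
have hWT : W^T = G *m Sm^T *m (blockV k.+1 v)^T.
  by rewrite {1}hWZ /Zm !trmx_mul mulmxA.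
set D' := diag_mx (\row_l Theta (f l) (f l)).
have hTS : blockT k.+1 alpha beta *m Sm = Sm *m D' := colsub_diag f hSS hTh hT.
have hAZ : A *m Zm = W *m (Rk *m D') + v k.+2 *m betaFP *m ekT R p k.+1 *m Sm + dV *m Sm.
  rewrite /Zm mulmxA hL !mulmxDl -(mulmxA (blockV _ _)) hTS mulmxA.
  by rewrite -/Zm hZ mulmxA.
have hkey : forall r (Y : 'M[R]_(n, r)), W^T *m Y = 0 ->
   W^T *m A *m Y = G *m (Sm^T *m (eT *m ((v k.+2 *m betaFP)^T *m Y) + dV^T *m Y)).
  move=> r Y hY.
  have -> : W^T *m A = (A *m W)^T by rewrite trmx_mul hA.
  rewrite {1}hWZ mulmxA trmx_mul -/G -mulmxA hAZ !linearD /= !mulmxDl.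
  rewrite [(W *m _)^T]trmx_mul -[(Rk *m D')^T *m W^T *m Y]mulmxA hY mulmx0 add0r.
  rewrite [(_ *m Sm)^T]trmx_mul [(dV *m Sm)^T]trmx_mul [(_ *m ekT R p k.+1)^T]trmx_mul.
  by rewrite -/eT !mulmxDr !mulmxA.
have nW : opnorm W <= 1 := opnorm_iso hWW.
have nWT : opnorm W^T <= 1 := opnorm_isoT hWW.
have nSmT : opnorm Sm^T <= 1 := opnorm_isoT (colsub_iso hSS finj).
have neT : opnorm eT <= 1 by rewrite /eT ekT_Esel; exact: opnorm_EselT.
have nQ : forall j, opnorm (Q j) <= 1 := fun j => opnorm_iso (hQQ j).
have nG : opnorm G = rho by rewrite /G opnorm_tr.
have nA := opnorm_ge0 A.
have nrho : 0 <= rho := opnorm_ge0 _.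
have nhk : 0 <= opnorm hk := opnorm_ge0 _.
set E := c * eps * opnorm A.
have nE : 0 <= E by rewrite /E !mulr_ge0 // ltW.
have ndvk : opnorm (dv k.+1) <= E by apply: hdv; rewrite /= leqnn.
have ndvkT : opnorm (dv k.+1)^T <= E by rewrite opnorm_tr.
have ndV : opnorm dV^T <= k.+1%:R * E.
  rewrite opnorm_tr; apply: le_trans (opnorm_mxrow _) _.
  have hs : \sum_(j < k.+1) E = k.+1%:R * E by rewrite sumr_const card_ord mulr_natl.
  rewrite -hs.
  by apply: ler_sum => j _; apply: hdv; rewrite /= ltn_ord.
have hyX : y = X1 + hk by rewrite /X1 /hk mulmxBl mul1mx subrK.
have hvb' : v k.+2 *m betaFP = X1 + hk - dv k.+1 by rewrite -hyX Fy addrK.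
have hCE : c * (2 * ((2 + c) * c + c)) * eps * opnorm A + E + k.+1%:R * E =
   (c * (2 * ((2 + c) * c + c)) + c + k.+1%:R * c) * eps * opnorm A.
  by rewrite /E; ring.
split.
  have -> : hk - W *m W^T *m v k.+2 *m betaFP = W *m (W^T *m dv k.+1).
    have -> : hk = P1 *m y by [].
    by rewrite /P1 Fy mulmxDr !mulmxA addrAC subrr add0r.
  apply: le_trans (opnormM_l1 _ nW) _; apply: le_trans (opnormM_l1 _ nWT) _.
  apply: le_trans ndvk _; rewrite -hCE /E.
  have : 0 <= c * (2 * ((2 + c) * c + c)) * eps * opnorm A.
    have nK : 0 <= c * (2 * ((2 + c) * c + c)).
      by apply: mulr_ge0 => //; apply: mulr_ge0 => //; apply: addr_ge0 => //; apply: mulr_ge0 => //; apply: addr_ge0.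
    by apply: mulr_ge0 => //; apply: mulr_ge0 => //; exact: ltW.
  have : 0 <= k.+1%:R * (c * eps * opnorm A) by apply: mulr_ge0.
  lra.
have nK : 0 <= c * (2 * ((2 + c) * c + c)) * eps * opnorm A.
  apply: mulr_ge0 => //; apply: mulr_ge0; last exact: ltW.
  by apply: mulr_ge0 => //; apply: mulr_ge0 => //; apply: addr_ge0 => //; apply: mulr_ge0 => //; apply: addr_ge0.
have nkE : 0 <= k.+1%:R * E by apply: mulr_ge0.
have final : forall x, x <= opnorm hk + E + k.+1%:R * E ->
  rho * x <= (1 + rho) * opnorm hk +
    (1 + rho) * ((c * (2 * ((2 + c) * c + c)) + c + k.+1%:R * c) * eps * opnorm A).
  move=> x hx; rewrite -hCE.
  have h1 := ler_wpM2l nrho hx.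
  have h2 : 0 <= rho * (c * (2 * ((2 + c) * c + c)) * eps * opnorm A) by apply: mulr_ge0.
  nra.
split; last first.
  move=> j.
  have [hWQ hQ0Q] := hQs j.
  have -> : h j - Q 0%N *m B1 *m (v k.+1)^T *m Q j.+1 = W *m (W^T *m A *m Q j.+1).
    by rewrite /h addrK /P1 !mulmxA.
  rewrite (hkey _ _ hWQ).
  have hX : (v k.+2 *m betaFP)^T *m Q j.+1 = hk^T *m Q j.+1 - (dv k.+1)^T *m Q j.+1.
    by rewrite hvb' linearB linearD /= mulmxBl mulmxDl -hX1 trmx_mul -mulmxA hQ0Q mulmx0 add0r.
  rewrite hX.
  have b1 : opnorm (hk^T *m Q j.+1 - (dv k.+1)^T *m Q j.+1) <= opnorm hk + E.
    apply: le_trans (opnormB _ _) _; apply: lerD; apply: le_trans (opnormM_r1 _ (nQ _)) _;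
      by rewrite ?opnorm_tr.
  have b2 : opnorm (Sm^T *m (eT *m (hk^T *m Q j.+1 - (dv k.+1)^T *m Q j.+1) + dV^T *m Q j.+1))
      <= opnorm hk + E + k.+1%:R * E.
    apply: le_trans (opnormM_l1 _ nSmT) _; apply: le_trans (opnormD _ _) _; apply: lerD.
      by apply: le_trans (opnormM_l1 _ neT) _.
    by apply: le_trans (opnormM_r1 _ (nQ _)) _.
  apply: le_trans (opnormM_l1 _ nW) _; apply: le_trans (opnormM _ _) _; rewrite nG.
  exact: final.
have hk0 : hk^T *m Q 0%N = 0.
  have -> : hk = W *m W^T *m y by [].
  by rewrite !trmx_mul trmxK -!mulmxA hWTQ0 !mulmx0.
have hX0 : (v k.+2 *m betaFP)^T *m Q 0%N = B1^T - (dv k.+1)^T *m Q 0%N.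
  by rewrite hvb' linearB linearD /= mulmxBl mulmxDl -hX1 trmx_mul -mulmxA hQQ mulmx1 hk0 addr0.
have hWv : W^T *m v k.+1 = G *m (Sm^T *m (rvec k.+1 v + eT *m ((v k.+1)^T *m v k.+1))).
  by rewrite hWT -!mulmxA rvec_split.
have -> : hk1 = W *m (W^T *m A *m Q 0%N - W^T *m v k.+1 *m B1^T).
  by rewrite /hk1 /P1 !mulmxBr !mulmxA.
rewrite (hkey _ _ hWTQ0) hX0 hWv opprK.
have -> : W *m (G *m (Sm^T *m (eT *m (B1^T - (dv k.+1)^T *m Q 0%N) + dV^T *m Q 0%N)) -
    G *m (Sm^T *m (rvec k.+1 v + eT *m ((v k.+1)^T *m v k.+1))) *m B1^T) +
    W *m G *m Sm^T *m rvec k.+1 v *m B1^T =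
  W *m (G *m (Sm^T *m (eT *m ((1%:M - (v k.+1)^T *m v k.+1) *m B1^T)
     - eT *m ((dv k.+1)^T *m Q 0%N) + dV^T *m Q 0%N))).
  rewrite !(mulmxDr, mulmxBr, mulmxDl, mulmxBl, mulmxN, mulNmx, mulmxA, mul1mx).
  exact: zid2.
set K := c * (2 * ((2 + c) * c + c)) * eps * opnorm A.
have final2 : forall x, x <= K + E + k.+1%:R * E ->
  rho * x <= (1 + rho) * opnorm hk +
    (1 + rho) * ((c * (2 * ((2 + c) * c + c)) + c + k.+1%:R * c) * eps * opnorm A).
  move=> x hx; rewrite -hCE -/K.
  have h1 := ler_wpM2l nrho hx.
  apply: arith2 => //; rewrite !addr_ge0 //.
have ceps : c * eps <= c by rewrite ler_piMr.
have nN : opnorm (1%:M - (v k.+1)^T *m v k.+1) <= c * eps.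
  by rewrite -opprB opnormN; apply: hvv; rewrite leqnSn.
have nv2 : opnorm (v k.+2) <= 2 + c.
  apply: le_trans (opnorm_gram _) _.
  have : opnorm ((v k.+2)^T *m v k.+2) <= c * eps + 1.
    rewrite -[(v k.+2)^T *m _](subrK 1%:M); apply: le_trans (opnormD _ _) _; apply: lerD.
      by apply: hvv; rewrite leqnn.
    exact: opnorm1.
  lra.
have ny : opnorm y <= (2 + c) * (c * opnorm A) + E.
  rewrite Fy; apply: le_trans (opnormD _ _) _; apply: lerD => //.
  apply: le_trans (opnormM _ _) _; apply: ler_pM => //; exact: opnorm_ge0.
have nP1 : opnorm (1%:M - P1) <= 2.
  apply: le_trans (opnormB _ _) _.
  have h1 : opnorm P1 <= 1 by apply: le_trans (opnormM_l1 _ nW) nWT.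
  have h2 := @opnorm1 R n.
  lra.
have nX1 : opnorm X1 <= 2 * opnorm y.
  have -> : X1 = (1%:M - P1) *m y by [].
  apply: le_trans (opnormM _ _) _; apply: ler_wpM2r => //; exact: opnorm_ge0.
have nB1 : opnorm B1^T <= opnorm X1.
  rewrite opnorm_tr; have -> : B1 = (Q 0%N)^T *m X1 by rewrite -hX1 mulmxA hQQ mul1mx.
  exact: opnormM_l1 (opnorm_isoT (hQQ 0%N)).
have nNB : opnorm ((1%:M - (v k.+1)^T *m v k.+1) *m B1^T) <= K.
  apply: le_trans (opnormM _ _) _.
  have hEa : E <= c * opnorm A by rewrite /E; nra.
  have hB : opnorm B1^T <= 2 * ((2 + c) * (c * opnorm A) + c * opnorm A) by nra.
  have h0 := opnorm_ge0 (1%:M - (v k.+1)^T *m v k.+1).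
  have h0' := opnorm_ge0 B1^T.
  have hce : 0 <= c * eps by rewrite mulr_ge0 // ltW.
  have : c * eps * opnorm B1^T <= c * eps * (2 * ((2 + c) * (c * opnorm A) + c * opnorm A)).
    by apply: ler_wpM2l.
  rewrite /K; nra.
apply: le_trans (opnormM_l1 _ nW) _; apply: le_trans (opnormM _ _) _; rewrite nG; apply: final2.
apply: le_trans (opnormM_l1 _ nSmT) _; apply: le_trans (opnormD _ _) _; apply: lerD.
  apply: le_trans (opnormB _ _) _; apply: lerD.
    by apply: le_trans (opnormM_l1 _ neT) _.
  apply: le_trans (opnormM_l1 _ neT) _; apply: le_trans (opnormM_r1 _ (nQ _)) _.
  exact: ndvkT.
by apply: le_trans (opnormM_r1 _ (nQ _)) _.
Qed.
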